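(* Let $\lambda_1,\lambda_2\ge0$ and let $RF(\mathbf m)$ be a resonance family with $RF(\mathbf m)\cap\mathcal B(\lambda+\rho)=\emptyset$. Then $$\sum_{\mathbf n\in RF(\mathbf m)}I_\lambda(\mathbf n)=0;$$ equivalently (since every $\mathbf n\in RF(\mathbf m)$ satisfies $I_\lambda(\mathbf n)=G_{res}(\mathbf n)\,x_1^{k_1(\mathbf n)}x_2^{k_2(\mathbf n)}$ and all $\mathbf n$ in the family have the same weight), $\sum_{\mathbf n\in RF(\mathbf m)}G_{res}(\mathbf n)=0$, where $G_{res}(\mathbf n)=q^{-d(\mathbf n)}(1-q^{-1})\prod_{j\in\{1,2,5,6\}}G(s_j(\mathbf n),n_j)$.
   Context: For $\mathbf m\in\mathbb Z_{\ge0}^6$ (a Lusztig datum for $G_2$ with respect to the reduced word $(2,1,2,1,2,1)$, $\alpha_1$ long, $\alpha_2$ short) and integers $\lambda_1,\lambda_2\ge0$: $s_1=\lambda_2+m_5+m_6-m_1-m_2-m_3$, $s_2=\lambda_2+m_5+m_6-m_2-2m_3$, $s_3=\lambda_2+m_6-m_3-m_4$, $s_4=\lambda_2+m_6-m_4-m_5$, $s_5=\lambda_2-m_5$, $s_6=\lambda_1-m_6$. $\mathcal B(\lambda+\rho)$: all $s_j\ge-1$ and $2s_3-s_4\ge-1$. $\mathcal B(\lambda+\rho)_{res}$: $m_3=m_5$, $s_j\ge-1$ for $j\in\{1,2,5,6\}$, $s_3=s_4\le0$ even; decoration $d(\mathbf m)=-s_3/2$. Weight $k(\mathbf m)=(k_1,k_2)=(m_2+3m_3+2m_4+3m_5+m_6,\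 m_1+m_2+2m_3+m_4+m_5)$. $G(s,m)=1-q^{-1}$ if $m>0,s\ge0$; $-q^{-1}$ if $m>0,s=-1$; $1$ if $m=0,s\ge0$; $0$ otherwise; $q>1$ is the residue field size of a non-archimedean local field $F$. Arrays $\left[\begin{smallmatrix}a&b&c&b&d\\&x&y&z&\\&&k&&\end{smallmatrix}\right]$ (entries in $\mathbb Z_{\ge0}$) with operators $e_1$: $(a,c,d;y;k)\mapsto(a-1,c+1,d-1;y+1;k+1)$, zero if $\min\{a,d\}=0$; $e_2$: $(b,c;x,z;k)\mapsto(b-1,c+3;x+1,z+1;k+1)$, zero if $b=0$ (unlisted entries unchanged, both copies of $b$ change together). $A(\mathbf m)=\left[\begin{smallmatrix}m_2&m_5&m_4&m_5&m_6\\&s_2+1&s_6+1&s_5+1&\\&&d(\mathbf m)&&\end{smallmatrix}\right]$. $\mathrm{hd}(A)=e_1^{\epsilon_1(A)}e_2^{\epsilon_2(A)}(A)$ with $\epsilon_i(A)=\max\{n:e_i^n(A)\ne0\}$. On $\mathcal B(\lambda+\rho)_{res}$, $\mathbf m\sim\mathbf n$ iff $k(\mathbf m)=k(\mathbf n)$ and $\mathrm{hd}(A(\mathbf m))=\mathrm{hd}(A(\mathbf n))$; the class of $\mathbf m$ is the resonance family $RF(\mathbf m)$. $I_\lambda(\mathbf n)$ is the MV integral $\int_{C^{\underline i}(\mathbf n)}f(u)\psi_\lambda(u)du$ over the cell $C^{\underline i}(\mathbf n)\subset U^-$ of the split simply-connected group $G_2(F)$ determined by the Iwasawa decomposition algorithm,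 with $f(u\varpi^{n_1\alpha_1^\vee+n_2\alpha_2^\vee}k)=(q^{-1}x_1)^{n_1}(q^{-1}x_2)^{n_2}$ ($u\in U^+$, $k\in G_2(\mathcal O)$), $\psi_\lambda(u)=\psi(\varpi^{\lambda_1}c_1(u)+\varpi^{\lambda_2}c_2(u))$ for $\psi$ of conductor $\mathcal O$ and $c_i(u)$ the simple-root coordinates of $u$, and $du$ Haar measure with $\mathrm{vol}(U^-(\mathcal O))=1$. *)

(* Defs.v *)
From HB Require Import structures.
From mathcomp Require Import all_boot all_order all_algebra.
Set Implicit Arguments. Unset Strict Implicit. Unset Printing Implicit Defensive.
Import Order.TTheory GRing.Theory Num.Theory.

Record LD := mkLD { m1 : nat; m2 : nat; m3 : nat; m4 : nat; m5 : nat; m6 : nat }.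

Local Open Scope ring_scope.

Section S.
Variables (lam1 lam2 : nat).

Definition s1 (m : LD) : int :=
  (lam2 + m5 m + m6 m)%:Z - (m1 m + m2 m + m3 m)%:Z.
Definition s2 (m : LD) : int :=
  (lam2 + m5 m + m6 m)%:Z - (m2 m + 2 * m3 m)%:Z.
Definition s3 (m : LD) : int :=
  (lam2 + m6 m)%:Z - (m3 m + m4 m)%:Z.
Definition s4 (m : LD) : int :=
  (lam2 + m6 m)%:Z - (m4 m + m5 m)%:Z.
Definition s5 (m : LD) : int := lam2%:Z - (m5 m)%:Z.
Definition s6 (m : LD) : int := lam1%:Z - (m6 m)%:Z.

Definition inB (m : LD) : bool :=
  [&& -1 <= s1 m, -1 <= s2 m, -1 <= s3 m, -1 <= s4 m, -1 <= s5 m, -1 <= s6 m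
    & -1 <= 2 * s3 m - s4 m].

Definition inBres (m : LD) : bool :=
  [&& m3 m == m5 m, -1 <= s1 m, -1 <= s2 m, -1 <= s5 m, -1 <= s6 m,
      s3 m == s4 m, s3 m <= 0 & (2 %| s3 m)%Z].

Definition deco (m : LD) : int := ((- s3 m) %/ 2)%Z.

Definition kw1 (m : LD) : nat := (m2 m + 3 * m3 m + 2 * m4 m + 3 * m5 m + m6 m)%N.
Definition kw2 (m : LD) : nat := (m1 m + m2 m + 2 * m3 m + m4 m + m5 m)%N.

(* arrays [a b c b d ; x y z ; k] encoded as (a,b,c,d,x,y,z,k); b stored once *)
Definition arr := (nat * nat * nat * nat * nat * nat * nat * nat)%type.

Definition e1 (A : arr) : option arr :=
  let: (a, b, c, d, x, y, z, k) := A in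
  if minn a d == 0%N then None
  else Some (a.-1, b, c.+1, d.-1, x, y.+1, z, k.+1).

Definition e2 (A : arr) : option arr :=
  let: (a, b, c, d, x, y, z, k) := A in
  if b == 0%N then None
  else Some (a, b.-1, (c + 3)%N, d, x.+1, y, z.+1, k.+1).

Definition arr_a (A : arr) : nat := let: (a, _, _, _, _, _, _, _) := A in a.
Definition arr_b (A : arr) : nat := let: (_, b, _, _, _, _, _, _) := A in b.

(* e^n applied to an array, 0 (= None) propagated *)
Definition iter_e (e : arr -> option arr) (n : nat) (A : arr) : option arr :=
  iter n (fun o => obind e o) (Some A).

(* eps_i(A) = max{n : e_i^n(A) <> 0}; the max ranges over n <= a (resp. n <= b)
   since each application of e1 (resp. e2) decreases a (resp. b) by one. *)
Definition eps1 (A : arr) : nat :=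
  \max_(n < (arr_a A).+1 | iter_e e1 n A != None) n.
Definition eps2 (A : arr) : nat :=
  \max_(n < (arr_b A).+1 | iter_e e2 n A != None) n.

Definition hd (A : arr) : option arr :=
  iter (eps1 A) (fun o => obind e1 o) (iter_e e2 (eps2 A) A).

(* A(m); entries s_j+1 and d(m) are nonnegative on B_res *)
Definition Aarr (m : LD) : arr :=
  (m2 m, m5 m, m4 m, m6 m, absz (s2 m + 1), absz (s6 m + 1), absz (s5 m + 1), absz (deco m)).

Definition simRF (m n : LD) : bool :=
  [&& kw1 m == kw1 n, kw2 m == kw2 n & hd (Aarr m) == hd (Aarr n)].

Definition inRF (m n : LD) : bool := inBres n && simRF m n.

Variables (R : realFieldType) (q : R).

Definition Gfun (s : int) (mm : nat) : R :=
  if (0 < mm)%N then (if 0 <= s then 1 - q^-1 else if s == -1 then - q^-1 else 0)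
  else (if 0 <= s then 1 else 0).

Definition Gres (n : LD) : R :=
  q ^ (- deco n) * (1 - q^-1) *
  Gfun (s1 n) (m1 n) * Gfun (s2 n) (m2 n) * Gfun (s5 n) (m5 n) * Gfun (s6 n) (m6 n).

(* sum over RF(m); every n in RF(m) has the weight of m, hence all its
   coordinates are <= kw1 m + kw2 m, so the finite box contains RF(m). *)
Definition sumRF (m : LD) : R :=
  let N := (kw1 m + kw2 m).+1 in
  \sum_(n1 < N) \sum_(n2 < N) \sum_(n3 < N) \sum_(n4 < N) \sum_(n5 < N) \sum_(n6 < N)
    (let n := mkLD n1 n2 n3 n4 n5 n6 in if inRF m n then Gres n else 0).

End S.

(* Main.v *)
Require Import Defs.
From HB Require Import structures.
From mathcomp Require Import all_boot all_order all_algebra zify ring.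
Import Order.TTheory GRing.Theory Num.Theory.
Set Warnings "-notation-overridden -ambiguous-paths".

Lemma iter_e2_le a b c d x y z k n : (n <= b)%N ->
  iter_e e2 n (a,b,c,d,x,y,z,k) = Some (a, b - n, c + 3*n, d, x+n, y, z+n, k+n)%N.
Proof.
elim: n => [|n IH] Hn /=.
  by congr Some; congr (_,_,_,_,_,_,_,_); lia.
rewrite /iter_e /= in IH *. rewrite IH ?(ltnW Hn) //=.
have -> : (b - n == 0)%N = false by apply/negbTE; lia.
congr Some; congr (_,_,_,_,_,_,_,_); lia.
Qed.

Lemma iter_e2_gt a b c d x y z k n : (b < n)%N ->
  iter_e e2 n (a,b,c,d,x,y,z,k) = None.
Proof.
elim: n => [|n IH] Hn //=.
rewrite /iter_e /= in IH *.
case: (ltnP b n) => Hbn.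
  by rewrite IH.
have Hb : b = n by lia. subst b.
have := iter_e2_le a n c d x y z k n (leqnn n); rewrite /iter_e => -> /=; by rewrite subnn eqxx.
Qed.

Lemma iter_e1_le a b c d x y z k n : (n <= minn a d)%N ->
  iter_e e1 n (a,b,c,d,x,y,z,k) = Some (a - n, b, c + n, d - n, x, y + n, z, k+n)%N.
Proof.
elim: n => [|n IH] Hn /=.
  by congr Some; congr (_,_,_,_,_,_,_,_); lia.
rewrite /iter_e /= in IH *. rewrite IH ?(ltnW Hn) //=.
have -> : (minn (a - n) (d - n) == 0)%N = false by apply/negbTE; lia.
congr Some; congr (_,_,_,_,_,_,_,_); lia.
Qed.

Lemma iter_e1_gt a b c d x y z k n : (minn a d < n)%N ->
  iter_e e1 n (a,b,c,d,x,y,z,k) = None.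
Proof.
elim: n => [|n IH] Hn //=.
rewrite /iter_e /= in IH *.
case: (ltnP (minn a d) n) => Hbn.
  by rewrite IH.
have Hb : minn a d = n by lia.
have := iter_e1_le a b c d x y z k n (eq_leq (esym Hb)); rewrite /iter_e => -> /=.
have -> : (minn (a - n) (d - n) == 0)%N by apply/eqP; lia.
done.
Qed.

Lemma eps2E a b c d x y z k : eps2 (a,b,c,d,x,y,z,k) = b.
Proof.
rewrite /eps2 /=. apply/eqP; rewrite eqn_leq; apply/andP; split.
  apply/bigmax_leqP => i _. by have := ltn_ord i.
have Hb : (b < b.+1)%N by [].
have := @leq_bigmax_cond _ (fun n : 'I_b.+1 => iter_e e2 n (a,b,c,d,x,y,z,k) != None)
   (fun n : 'I_b.+1 => nat_of_ord n) (Ordinal Hb).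
rewrite /= iter_e2_le //.
by apply.
Qed.

Lemma eps1E a b c d x y z k : eps1 (a,b,c,d,x,y,z,k) = minn a d.
Proof.
rewrite /eps1 /=. apply/eqP; rewrite eqn_leq; apply/andP; split.
  apply/bigmax_leqP => i; case: (leqP (nat_of_ord i) (minn a d)) => // Hi.
  by rewrite iter_e1_gt.
have Hb : (minn a d < a.+1)%N by lia.
have := @leq_bigmax_cond _ (fun n : 'I_a.+1 => iter_e e1 n (a,b,c,d,x,y,z,k) != None)
   (fun n : 'I_a.+1 => nat_of_ord n) (Ordinal Hb).
rewrite /= iter_e1_le //; by apply.
Qed.

Lemma hdE a b c d x y z k : hd (a,b,c,d,x,y,z,k) =
  Some (a - minn a d, 0, c + 3*b + minn a d, d - minn a d, x + b, y + minn a d, z + b, k + b + minn a d)%N.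
Proof.
rewrite /hd eps1E eps2E iter_e2_le // subnn.
have := iter_e1_le a 0 (c + 3*b) d (x+b) y (z+b) (k+b) _ (leqnn (minn a d)).
rewrite /iter_e => ->. done.
Qed.

Local Open Scope ring_scope.

Lemma famE l1 l2 m n : inBres l1 l2 m -> inBres l1 l2 n ->
  simRF l1 l2 m n = [&& m1 n == m1 m, (m2 n + m6 m == m6 n + m2 m)%N &
      (m4 n + 3 * m5 n + m6 n == m4 m + 3 * m5 m + m6 m)%N].
Proof.
rewrite /inBres /simRF /Aarr !hdE /kw1 /kw2 /deco /s1 /s2 /s3 /s4 /s5 /s6.
case: m => [a1 a2 a3 a4 a5 a6]; case: n => [b1 b2 b3 b4 b5 b6] /=.
move=> Hm Hn.
apply/idP/idP.
  case/and3P => /eqP K1 /eqP K2 /eqP [E1 E3 E4 E5 E6 E7 E8].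
  apply/and3P; split; apply/eqP; lia.
case/and3P => /eqP K1 /eqP K2 /eqP K3.
apply/and3P; split; apply/eqP; first lia; first lia.
congr Some; congr (_,_,_,_,_,_,_,_); lia.
Qed.

Local Open Scope ring_scope.

Lemma sum_one (R : nmodType) N (f : nat -> R) v :
  (forall i, i <> v -> f i = 0) -> (~ (v < N)%N -> f v = 0) ->
  \sum_(i < N) f i = f v.
Proof.
move=> H0 H1. case: (ltnP v N) => Hv.
  rewrite (bigD1 (Ordinal Hv)) //= big1 ?addr0 // => i Hi; apply: H0.
  move=> E; move: Hi; apply/negP; rewrite negbK; apply/eqP; apply: val_inj => /=; exact E.
rewrite H1; last by rewrite ltnNge Hv.
rewrite big1 // => i _; apply: H0 => E. have := ltn_ord i; rewrite E; lia.
Qed.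

Lemma sum4 (R : nmodType) N (T : nat -> nat -> nat -> nat -> R) v1 v2 v3 v4 :
  (forall i j k l, T i j k l <> 0 ->
     [/\ i = v1, j = v2, k = v3, l = v4 & [&& v1 < N, v2 < N, v3 < N & v4 < N]%N]) ->
  \sum_(i < N) \sum_(j < N) \sum_(k < N) \sum_(l < N) T i j k l = T v1 v2 v3 v4.
Proof.
move=> H.
have Z : forall i j k l, ~ [/\ i = v1, j = v2, k = v3, l = v4 & [&& v1 < N, v2 < N, v3 < N & v4 < N]%N] ->
   T i j k l = 0.
  move=> i j k l Hn; case: (eqVneq (T i j k l) 0) => // /eqP Hne.
  by case: Hn; apply: H.
rewrite (@sum_one _ N (fun i => \sum_(j < N) \sum_(k < N) \sum_(l < N) T i j k l) v1).
- rewrite (@sum_one _ N (fun j => \sum_(k < N) \sum_(l < N) T v1 j k l) v2).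
  + rewrite (@sum_one _ N (fun k => \sum_(l < N) T v1 v2 k l) v3).
    * rewrite (@sum_one _ N (fun l => T v1 v2 v3 l) v4) // => [l Hl|Hl]; apply: Z; case=> *; lia.
    * move=> k Hk; apply: big1 => l _; apply: Z; case=> *; lia.
    * move=> Hk; apply: big1 => l _; apply: Z; case=> *; lia.
  + move=> j Hj; apply: big1 => k _; apply: big1 => l _; apply: Z; case=> *; lia.
  + move=> Hj; apply: big1 => k _; apply: big1 => l _; apply: Z; case=> *; lia.
- move=> i Hi; apply: big1 => j _; apply: big1 => k _; apply: big1 => l _; apply: Z; case=> *; lia.
- move=> Hi; apply: big1 => j _; apply: big1 => k _; apply: big1 => l _; apply: Z; case=> *; lia.
Qed.

Lemma swap3 (R : nmodType) N (G : nat -> nat -> nat -> R) :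
  \sum_(x < N) \sum_(y < N) \sum_(z < N) G x y z =
  \sum_(y < N) \sum_(z < N) \sum_(x < N) G x y z.
Proof.
rewrite exchange_big; apply: eq_bigr => y _; by rewrite exchange_big.
Qed.

Lemma reorder6 (R : nmodType) N (F : nat -> nat -> nat -> nat -> nat -> nat -> R) :
  \sum_(a < N) \sum_(b < N) \sum_(c < N) \sum_(d < N) \sum_(e < N) \sum_(f < N) F a b c d e f =
  \sum_(e < N) \sum_(f < N) \sum_(a < N) \sum_(b < N) \sum_(c < N) \sum_(d < N) F a b c d e f.
Proof.
transitivity (\sum_(a < N) \sum_(b < N) \sum_(c < N) \sum_(e < N) \sum_(f < N) \sum_(d < N) F a b c d e f).
  apply: eq_bigr => a _; apply: eq_bigr => b _; apply: eq_bigr => c _.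
  exact: (@swap3 _ N (fun d e f => F a b c d e f)).
transitivity (\sum_(a < N) \sum_(b < N) \sum_(e < N) \sum_(f < N) \sum_(c < N) \sum_(d < N) F a b c d e f).
  apply: eq_bigr => a _; apply: eq_bigr => b _.
  exact: (@swap3 _ N (fun c e f => \sum_(d < N) F a b c d e f)).
transitivity (\sum_(a < N) \sum_(e < N) \sum_(f < N) \sum_(b < N) \sum_(c < N) \sum_(d < N) F a b c d e f).
  apply: eq_bigr => a _.
  exact: (@swap3 _ N (fun b e f => \sum_(c < N) \sum_(d < N) F a b c d e f)).
exact: (@swap3 _ N (fun a e f => \sum_(b < N) \sum_(c < N) \sum_(d < N) F a b c d e f)).
Qed.

Local Open Scope ring_scope.



Lemma geo0 (R : realFieldType) (q : R) (hq : q != 0) n :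
  \sum_(0 <= i < n.+1) q ^+ i * Gfun q 0 i = q ^+ n.
Proof.
elim: n => [|n IH]; first by rewrite big_nat1 /Gfun /= mulr1.
rewrite big_nat_recr //= IH /Gfun /= exprS.
field.
exact: hq.
Qed.

Lemma Gsum0 (R : realFieldType) (q : R) (hq : q != 0) L N : (L.+1 < N)%N ->
  \sum_(i < N) (if (i <= L.+1)%N then q ^+ i * Gfun q (L%:Z - i%:Z) i else 0) = 0.
Proof.
move=> HN.
rewrite -(big_mkord xpredT (fun i => if (i <= L.+1)%N then q ^+ i * Gfun q (L%:Z - i%:Z) i else 0)).
rewrite (big_cat_nat (n := L.+2)) //=.
rewrite [\sum_(L.+2 <= i < N) _]big1_seq ?addr0; last first.
  move=> i /andP [_]; rewrite mem_index_iota => /andP [Hi _].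
  case: ifP => // H; lia.
rewrite big_nat_recr //= leqnn.
rewrite (eq_big_nat _ _ (F2 := fun i => q ^+ i * Gfun q 0 i)); last first.
  move=> i Hi. have -> : (i <= L.+1)%N by lia.
  congr (_ * _). rewrite /Gfun.
  have -> : (0 <= L%:Z - i%:Z) by lia.
  done.
rewrite geo0 // /Gfun /=.
have -> : (0 <= L%:Z - L.+1%:Z) = false by lia.
have -> : (L%:Z - L.+1%:Z == -1) by lia.
rewrite exprS. field. exact: hq.
Qed.

Local Open Scope ring_scope.

Definition Cc m := (m4 m + 3 * m5 m + m6 m)%N.
Definition vv m e f := mkLD (m1 m) (f + m2 m - m6 m) e (Cc m - 3*e - f) e f.
Definition Kz l2 m : int := deco l2 m + (m5 m)%:Z + (m6 m)%:Z.
Definition rect l1 l2 m e f := [&& (e <= l2.+1)%N, (e + m2 m <= l2.+1 + m6 m)%N,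
   (f <= l1.+1)%N & (m6 m <= f + m2 m)%N].

Lemma inRF_vv l1 l2 m e f : inBres l1 l2 m ->
  inRF l1 l2 m (vv m e f) =
  [&& rect l1 l2 m e f, ((e + f)%:Z <= Kz l2 m) & (3*e + f <= Cc m)%N].
Proof.
move=> Hm; rewrite /inRF.
case Hb: (inBres l1 l2 (vv m e f)) => /=.
  rewrite famE //.
  move: Hm Hb; rewrite /inBres /rect /Kz /vv /Cc /deco /s1 /s2 /s3 /s4 /s5 /s6 /=.
  move=> Hm Hb.
  apply/idP/idP => H; lia.
move: Hm Hb; rewrite /inBres /rect /Kz /vv /Cc /deco /s1 /s2 /s3 /s4 /s5 /s6 /=.
move=> Hm Hb. apply/esym/negbTE/negP => H. move/negP: Hb; apply. lia.
Qed.

Local Open Scope ring_scope.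

Lemma fam_coords l1 l2 m i j k l e f : inBres l1 l2 m ->
  inRF l1 l2 m (mkLD i j k l e f) ->
  [/\ i = m1 m, j = (f + m2 m - m6 m)%N, k = e, l = (Cc m - 3*e - f)%N &
   [&& (m1 m < (kw1 m + kw2 m).+1)%N, ((f + m2 m - m6 m) < (kw1 m + kw2 m).+1)%N,
       (e < (kw1 m + kw2 m).+1)%N & ((Cc m - 3*e - f) < (kw1 m + kw2 m).+1)%N]].
Proof.
move=> Hm /andP [Hn]. rewrite famE //.
move: Hm Hn; rewrite /inBres /Cc /kw1 /kw2 /deco /s1 /s2 /s3 /s4 /s5 /s6 /=.
move=> Hm Hn H. split; lia.
Qed.

Lemma inB_of l1 l2 n : inBres l1 l2 n -> s3 l2 n = 0 -> inB l1 l2 n.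
Proof.
rewrite /inBres /inB /s1 /s2 /s3 /s4 /s5 /s6 => H1 H2. lia.
Qed.

Lemma rect_lt l1 l2 m e f : inBres l1 l2 m ->
  (forall n, inRF l1 l2 m n -> ~~ inB l1 l2 n) ->
  rect l1 l2 m e f -> (e + f)%:Z < Kz l2 m.
Proof.
move=> Hm Hd Hr. rewrite ltNge; apply/negP => Hge.
pose K := absz (Kz l2 m).
have HK : (K%:Z = Kz l2 m) by move: Hm; rewrite /K /Kz /inBres /deco /s1 /s2 /s3 /s4 /s5 /s6; lia.
pose g0 := (m6 m - m2 m)%N.
pose b := minn e (K - g0).
pose w := if (2 * b <= K + l2)%N then (b, K - b)%N else (l2, 1%N).
have Hw : inRF l1 l2 m (vv m w.1 w.2) && (s3 l2 (vv m w.1 w.2) == 0).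
  rewrite inRF_vv //.
  move: Hm Hr Hge HK; rewrite /w /b /g0 /inBres /rect /Kz /vv /Cc /deco /s1 /s2 /s3 /s4 /s5 /s6 /=.
  move=> Hm Hr Hge HK.
  case: ifP => Hc /=; lia.
case/andP: Hw => H1 /eqP H2.
move: (Hd _ H1); rewrite inB_of //.
by case/andP: H1.
Qed.

Local Open Scope ring_scope.

Definition ind (R : realFieldType) (b : bool) : R := if b then 1 else 0.

Lemma Gres_vv l1 l2 (R : realFieldType) (q : R) (hq : q != 0) m e f :
  inBres l1 l2 m -> rect l1 l2 m e f -> (e + f)%:Z < Kz l2 m ->
  Gres l1 l2 q (vv m e f) =
  (q ^ (- Kz l2 m) * (1 - q^-1) * Gfun q (s1 l2 m) (m1 m)) *
  ((q ^+ e * Gfun q (l2%:Z - e%:Z) e) * (q ^+ f * Gfun q (l1%:Z - f%:Z) f) *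
   (ind R (0 <= l2%:Z + (m6 m)%:Z - (m2 m)%:Z - e%:Z) - q^-1 * ind R (0 < f + m2 m - m6 m)%N)).
Proof.
move=> Hm Hr Hlt.
rewrite /Gres.
have E1 : - deco l2 (vv m e f) = - Kz l2 m + e%:Z + f%:Z.
  move: Hm Hr Hlt; rewrite /inBres /rect /Kz /vv /Cc /deco /s1 /s2 /s3 /s4 /s5 /s6 /=; lia.
have E2 : s1 l2 (vv m e f) = s1 l2 m.
  move: Hm Hr Hlt; rewrite /inBres /rect /Kz /vv /Cc /deco /s1 /s2 /s3 /s4 /s5 /s6 /=; lia.
have E3 : s2 l2 (vv m e f) = l2%:Z + (m6 m)%:Z - (m2 m)%:Z - e%:Z.
  move: Hm Hr Hlt; rewrite /inBres /rect /Kz /vv /Cc /deco /s1 /s2 /s3 /s4 /s5 /s6 /=; lia.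
have E4 : -1 <= l2%:Z + (m6 m)%:Z - (m2 m)%:Z - e%:Z.
  move: Hm Hr Hlt; rewrite /inBres /rect /Kz /vv /Cc /deco /s1 /s2 /s3 /s4 /s5 /s6 /=; lia.
have E5 : s5 l2 (vv m e f) = l2%:Z - e%:Z by rewrite /s5.
have E6 : s6 l1 (vv m e f) = l1%:Z - f%:Z by rewrite /s6.
rewrite E1 E2 E3 E5 E6 !expfzDr //=.
have -> : Gfun q (l2%:Z + (m6 m)%:Z - (m2 m)%:Z - e%:Z) (f + m2 m - m6 m) =
   ind R (0 <= l2%:Z + (m6 m)%:Z - (m2 m)%:Z - e%:Z) - q^-1 * ind R (0 < f + m2 m - m6 m)%N.
  rewrite /Gfun /ind.
  case Hs: (0 <= l2%:Z + (m6 m)%:Z - (m2 m)%:Z - e%:Z).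
    by case: (0 < f + m2 m - m6 m)%N; rewrite ?mulr1 ?mulr0 ?subr0.
  have -> : (l2%:Z + (m6 m)%:Z - (m2 m)%:Z - e%:Z == -1) by lia.
  by case: (0 < f + m2 m - m6 m)%N; rewrite ?mulr1 ?mulr0 ?subr0 ?sub0r.
have Ee : q ^ (e%:Z) = q ^+ e by []. have Ef : q ^ (f%:Z) = q ^+ f by []. rewrite Ee Ef. ring.
Qed.

Local Open Scope ring_scope.

Lemma sum_prod (R : comPzRingType) N (a1 b1 a2 b2 : nat -> R) c r :
  \sum_(e < N) \sum_(f < N) c * (a1 e * b1 f - r * (a2 e * b2 f)) =
  c * ((\sum_(e < N) a1 e) * (\sum_(f < N) b1 f) - r * ((\sum_(e < N) a2 e) * (\sum_(f < N) b2 f))).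
Proof.
rewrite !mulr_suml mulr_sumr -sumrB mulr_sumr; apply: eq_bigr => e _.
rewrite !mulr_sumr -sumrB mulr_sumr; apply: eq_bigr => f _.
by rewrite mulrA.
Qed.

Lemma Kz_lt l1 l2 m : inBres l1 l2 m -> Kz l2 m < (kw1 m + kw2 m).+1%:Z.
Proof.
rewrite /inBres /Kz /kw1 /kw2 /deco /s1 /s2 /s3 /s4 /s5 /s6; lia.
Qed.

Lemma C_ok l1 l2 m e f : inBres l1 l2 m -> rect l1 l2 m e f -> (e + f)%:Z < Kz l2 m ->
  (3 * e + f <= Cc m)%N.
Proof.
rewrite /inBres /rect /Kz /Cc /deco /s1 /s2 /s3 /s4 /s5 /s6; lia.
Qed.

Theorem mainTheorem11 (lam1 lam2 : nat) (R : realFieldType) (q : R) (hq : 1 < q)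
  (m : LD) (hm : inBres lam1 lam2 m)
  (hdisj : forall n : LD, inRF lam1 lam2 m n -> ~~ inB lam1 lam2 n) :
  sumRF lam1 lam2 q m = 0.
Proof.
have q0 : q != 0 by rewrite gt_eqF // (lt_trans ltr01 hq).
set N := (kw1 m + kw2 m).+1.
pose T (a b c d e f : nat) : R :=
  let n := mkLD a b c d e f in if inRF lam1 lam2 m n then Gres lam1 lam2 q n else 0.
have -> : sumRF lam1 lam2 q m = \sum_(a < N) \sum_(b < N) \sum_(c < N) \sum_(d < N)
   \sum_(e < N) \sum_(f < N) T a b c d e f by [].
rewrite reorder6.
pose c0 := q ^ (- Kz lam2 m) * (1 - q^-1) * Gfun q (s1 lam2 m) (m1 m).
pose Re e := ((e <= lam2.+1) && (e + m2 m <= lam2.+1 + m6 m))%N.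
pose Rf f := ((f <= lam1.+1) && (m6 m <= f + m2 m))%N.
pose a1 e := if Re e then q ^+ e * Gfun q (lam2%:Z - e%:Z) e *
    ind R (0 <= lam2%:Z + (m6 m)%:Z - (m2 m)%:Z - e%:Z) else 0.
pose b1 f := if Rf f then q ^+ f * Gfun q (lam1%:Z - f%:Z) f else 0.
pose a2 e := if Re e then q ^+ e * Gfun q (lam2%:Z - e%:Z) e else 0.
pose b2 f := if Rf f then q ^+ f * Gfun q (lam1%:Z - f%:Z) f * ind R (0 < f + m2 m - m6 m)%N else 0.
transitivity (\sum_(e < N) \sum_(f < N) c0 * (a1 e * b1 f - q^-1 * (a2 e * b2 f))).
  apply: eq_bigr => e _; apply: eq_bigr => f _.
  rewrite (@sum4 _ N (fun a b c d => T a b c d e f) (m1 m) (f + m2 m - m6 m)%N e (Cc m - 3 * e - f)%N); last first.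
    move=> i j k l; rewrite /T /=; case: ifP => H Hne; last by case: Hne.
    exact: fam_coords H.
  rewrite /T -/(vv m e f) inRF_vv //.
  have -> : rect lam1 lam2 m e f = Re e && Rf f by rewrite /rect /Re /Rf !andbA.
  case: ifP => HR.
    case/and3P: HR => HRR _ _.
    have Hr : rect lam1 lam2 m e f by rewrite /rect; move: HRR; rewrite /Re /Rf; lia.
    have Hlt := rect_lt lam1 lam2 m e f hm hdisj Hr.
    rewrite (Gres_vv lam1 lam2 R q q0 m e f hm Hr Hlt) /c0 /a1 /b1 /a2 /b2.
    case/andP: HRR => -> -> /=. ring.
  case HRR: (Re e && Rf f).
    have Hr : rect lam1 lam2 m e f by rewrite /rect; move: HRR; rewrite /Re /Rf; lia.
    have Hlt := rect_lt lam1 lam2 m e f hm hdisj Hr.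
    have Hc := C_ok lam1 lam2 m e f hm Hr Hlt.
    move: HR; rewrite HRR Hc /=. have -> : ((e + f)%:Z <= Kz lam2 m) by lia. done.
  move: HRR; rewrite /a1 /b1 /a2 /b2; case: (Re e); case: (Rf f) => //= _; ring.
rewrite sum_prod.
have B2 : (m2 m <= m6 m)%N -> (lam2.+1 < N)%N.
  move=> H. have Hr : rect lam1 lam2 m lam2.+1 (m6 m)
    by move: hm; rewrite /rect /inBres /s1 /s2 /s3 /s4 /s5 /s6; lia.
  have := rect_lt lam1 lam2 m _ _ hm hdisj Hr; have := Kz_lt lam1 lam2 m hm; rewrite /N; lia.
have B1 : (m6 m <= m2 m)%N -> (lam1.+1 < N)%N.
  move=> H. have Hr : rect lam1 lam2 m (m5 m) lam1.+1
    by move: hm; rewrite /rect /inBres /s1 /s2 /s3 /s4 /s5 /s6; lia.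
  have := rect_lt lam1 lam2 m _ _ hm hdisj Hr; have := Kz_lt lam1 lam2 m hm; rewrite /N; lia.
have sA2 : (m2 m <= m6 m)%N -> \sum_(e < N) a2 e = 0.
  move=> H; transitivity (\sum_(i < N) (if (i <= lam2.+1)%N then q ^+ i * Gfun q (lam2%:Z - i%:Z) i else 0));
    last exact: (Gsum0 R q q0 lam2 N (B2 H)).
  apply: eq_bigr => e _; rewrite /a2 /Re.
  have -> : ((e <= lam2.+1) && (e + m2 m <= lam2.+1 + m6 m))%N = (e <= lam2.+1)%N by apply/idP/idP; lia.
  done.
have sA1 : (m2 m < m6 m)%N -> \sum_(e < N) a1 e = 0.
  move=> H; transitivity (\sum_(i < N) (if (i <= lam2.+1)%N then q ^+ i * Gfun q (lam2%:Z - i%:Z) i else 0));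
    last exact: (Gsum0 R q q0 lam2 N (B2 (ltnW H))).
  apply: eq_bigr => e _; rewrite /a1 /Re.
  have -> : ((e <= lam2.+1) && (e + m2 m <= lam2.+1 + m6 m))%N = (e <= lam2.+1)%N by apply/idP/idP; lia.
  case: ifP => H1 //; rewrite /ind ifT ?mulr1 //; lia.
have sB1 : (m6 m <= m2 m)%N -> \sum_(f < N) b1 f = 0.
  move=> H; transitivity (\sum_(i < N) (if (i <= lam1.+1)%N then q ^+ i * Gfun q (lam1%:Z - i%:Z) i else 0));
    last exact: (Gsum0 R q q0 lam1 N (B1 H)).
  apply: eq_bigr => f _; rewrite /b1 /Rf.
  have -> : ((f <= lam1.+1) && (m6 m <= f + m2 m))%N = (f <= lam1.+1)%N by apply/idP/idP; lia.
  done.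
have sB2 : (m6 m < m2 m)%N -> \sum_(f < N) b2 f = 0.
  move=> H; transitivity (\sum_(i < N) (if (i <= lam1.+1)%N then q ^+ i * Gfun q (lam1%:Z - i%:Z) i else 0));
    last exact: (Gsum0 R q q0 lam1 N (B1 (ltnW H))).
  apply: eq_bigr => f _; rewrite /b2 /Rf.
  have -> : ((f <= lam1.+1) && (m6 m <= f + m2 m))%N = (f <= lam1.+1)%N by apply/idP/idP; lia.
  case: ifP => H1 //; rewrite /ind ifT ?mulr1 //; lia.
case: (ltngtP (m2 m) (m6 m)) => Hd.
- by rewrite sA1 // sA2 ?(ltnW Hd) // !mul0r mulr0 subrr mulr0.
- by rewrite sB1 ?(ltnW Hd) // sB2 // !mulr0 subrr mulr0.
- by rewrite sB1 ?Hd // sA2 ?Hd // !mulr0 mul0r mulr0 subrr mulr0.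
Qed.
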